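(* Let $\beta_1,\beta_2,P_D,R_{th},r_C,r_D>0$, and write $a=R_{th}/r_C$. Suppose $$r_C>2R_{th}\qquad\text{and}\qquad \beta_1\ln\big((1-2a)r_D\big)-\beta_2P_D\,a\ge 0.$$ Define - $c_1=\min\Big\{\underline{c},\ \dfrac{\beta_1\ln((1-2a)r_D)-\beta_2 aP_D}{1-2a}\Big\}$, - $c_2=\dfrac{\beta_2P_D}{2}+\dfrac{\beta_1\beta_2P_D}{\beta_2P_D-2\beta_1}$, - $\overline{c}=\dfrac{\beta_2P_D}{2}+\beta_1 r_D\,e^{-\left(1+\frac{\beta_2P_D}{2\beta_1}\right)}$, - $\underline{c}=\dfrac{\beta_2P_D}{2}+\dfrac{\beta_1 r_C}{r_C-2R_{th}}$. Let $$\mathcal{C}=\begin{cases}\{c_1,c_2\}, & \text{if } \underline{c}<c_2<\overline{c},\\ \{c_1\}, & \text{if } \overline{c}<\underline{c},\\ \{c_1,\overline{c},\underline{c}\}, & \text{otherwise,}\end{cases}$$ and $c^*=\arg\max_{c\in\mathcal{C}}U_C(\alpha^*(c),c)$. Then $(c^*,\alpha^*(c^* ))$ is the Stackelberg equilibrium. That is, $\alpha^*(\cdot)$ is the follower's best response, and $c^*$ solves the leader's problem $$\max_{c}\ U_C(\alpha^*(c),c)\quad\text{s.t.}\quad U_D(\alpha^*(c),c)\ge 0,\qquad c\ge 0 .$$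
   Context: Setting: a cell-edge user (CEU, the leader) charges price $c$ to a D2D pair (the follower). The D2D pair then chooses its TDMA allocation coefficient $\alpha\in(0,1/2)$. Two time fractions of length $\alpha$ are used to relay the CEU's data, and the remaining fraction $1-2\alpha$ is used for D2D transmission. Rates: - $r_C=\min\{\log_2(1+P_Ch_{ib}/N_0),\ \log_2(1+P_Ch_{ib}/N_0+P_Dg_{jb}/N_0)\}>0$. - The CEU rate is $R_C(\alpha)=\alpha r_C$. - $r_D=\log_2(1+P_Dg_j/N_0)>0$. - The D2D rate is $(1-2\alpha)r_D$. - $R_{th}>0$ is the CEU's rate requirement. Utilities: - D2D pair: $U_D(\alpha,c)=\beta_1\ln\big((1-2\alpha)r_D\big)-\beta_2P_D\alpha-c(1-2\alpha)$. - CEU: $U_C(\alpha,c)=\beta_1\ln(\alpha r_C)+c(1-2\alpha)$. Follower's best response: $\alpha^*(c)$ maximizes $U_D(\alpha,c)$ subject to $\alpha r_C\ge R_{th}$ and $0<\alpha<1/2$. Explicitly, $$\alpha^*(c)=\frac{R_{th}}{r_C}\quad\text{if } c\le \frac{\beta_2P_D}{2}+\frac{\beta_1 r_C}{r_C-2R_{th}},$$ and $\alpha^*(c)=\frac12-\frac{\beta_1}{2c-\beta_2P_D}$ otherwise. *)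

(* Defs.v *)
From Stdlib Require Import Reals List.
Open Scope R_scope.

Definition U_D (b1 b2 PD rD alpha c : R) : R :=
  b1 * ln ((1 - 2 * alpha) * rD) - b2 * PD * alpha - c * (1 - 2 * alpha).

Definition U_C (b1 rC alpha c : R) : R :=
  b1 * ln (alpha * rC) + c * (1 - 2 * alpha).

Definition c_low (b1 b2 PD rC Rth : R) : R :=
  b2 * PD / 2 + b1 * rC / (rC - 2 * Rth).

Definition alpha_star (b1 b2 PD rC Rth c : R) : R :=
  if Rle_dec c (c_low b1 b2 PD rC Rth) then Rth / rC
  else / 2 - b1 / (2 * c - b2 * PD).

Definition c_1 (b1 b2 PD rC rD Rth : R) : R :=
  let a := Rth / rC in
  Rmin (c_low b1 b2 PD rC Rth)
       ((b1 * ln ((1 - 2 * a) * rD) - b2 * a * PD) / (1 - 2 * a)).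

Definition c_2 (b1 b2 PD : R) : R :=
  b2 * PD / 2 + b1 * b2 * PD / (b2 * PD - 2 * b1).

Definition c_high (b1 b2 PD rD : R) : R :=
  b2 * PD / 2 + b1 * rD * exp (- (1 + b2 * PD / (2 * b1))).

Definition cand_set (b1 b2 PD rC rD Rth : R) : list R :=
  let cl := c_low b1 b2 PD rC Rth in
  let ch := c_high b1 b2 PD rD in
  let c2 := c_2 b1 b2 PD in
  let c1 := c_1 b1 b2 PD rC rD Rth in
  if Rlt_dec cl c2 then
    (if Rlt_dec c2 ch then c1 :: c2 :: nil
     else if Rlt_dec ch cl then c1 :: nil else c1 :: ch :: cl :: nil)
  else if Rlt_dec ch cl then c1 :: nil else c1 :: ch :: cl :: nil.

(* Main.v *)
Require Import Defs.
From Stdlib Require Import Reals List Lra.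
Open Scope R_scope.

Lemma ln_tan x y : 0 < x -> 0 < y -> ln x <= ln y + x / y - 1.
Proof.
  intros hx hy.
  pose proof (exp_ineq1_le (ln x - ln y)) as H.
  unfold Rminus in H. rewrite exp_plus, exp_Ropp, !exp_ln in H by lra.
  unfold Rdiv. lra.
Qed.

Lemma UD_cmp b1 b2 PD rD c al be : 0 < b1 -> 0 < rD -> 0 < al < /2 -> 0 < be < /2 ->
  (al - be) * (2 * c - b2 * PD - 2 * b1 / (1 - 2 * be)) <= 0 ->
  U_D b1 b2 PD rD al c <= U_D b1 b2 PD rD be c.
Proof.
  intros h1 hr ha hb hs. unfold U_D.
  assert (H := ln_tan ((1 - 2 * al) * rD) ((1 - 2 * be) * rD)).
  assert (Hx : 0 < (1 - 2 * al) * rD) by nra.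
  assert (Hy : 0 < (1 - 2 * be) * rD) by nra.
  specialize (H Hx Hy).
  assert (E : b1 * ((1 - 2 * al) * rD / ((1 - 2 * be) * rD) - 1) - b2 * PD * (al - be)
     - c * (1 - 2 * al) + c * (1 - 2 * be)
     = (al - be) * (2 * c - b2 * PD - 2 * b1 / (1 - 2 * be))) by (field; lra).
  assert (b1 * ln ((1 - 2 * al) * rD) <= b1 * (ln ((1 - 2 * be) * rD) + (1 - 2 * al) * rD / ((1 - 2 * be) * rD) - 1))
    by (apply Rmult_le_compat_l; lra).
  nra.
Qed.

Lemma UC_cmp b1 b2 PD rC c d : 0 < b1 -> 0 < rC ->
  2 * b1 < 2 * c - b2 * PD -> 2 * b1 < 2 * d - b2 * PD ->
  ((2 * d - b2 * PD) - (2 * c - b2 * PD)) *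
    (b2 * PD * ((2 * d - b2 * PD) - 2 * b1) - 2 * b1 * (2 * d - b2 * PD)) <= 0 ->
  U_C b1 rC (/ 2 - b1 / (2 * c - b2 * PD)) c <= U_C b1 rC (/ 2 - b1 / (2 * d - b2 * PD)) d.
Proof.
  intros h1 hr ht hs hcond. unfold U_C.
  set (t := 2 * c - b2 * PD) in *. set (s := 2 * d - b2 * PD) in *.
  assert (ct : c = (t + b2 * PD) / 2) by (unfold t; field).
  assert (ds : d = (s + b2 * PD) / 2) by (unfold s; field).
  assert (Hx : 0 < (/ 2 - b1 / t) * rC).
  { apply Rmult_lt_0_compat; auto. replace (/2 - b1/t) with ((t - 2*b1)/(2*t)) by (field; lra).
    apply Rdiv_lt_0_compat; lra. }
  assert (Hy : 0 < (/ 2 - b1 / s) * rC).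
  { apply Rmult_lt_0_compat; auto. replace (/2 - b1/s) with ((s - 2*b1)/(2*s)) by (field; lra).
    apply Rdiv_lt_0_compat; lra. }
  assert (H := ln_tan _ _ Hx Hy).
  assert (b1 * ln ((/ 2 - b1 / t) * rC) <= b1 * (ln ((/ 2 - b1 / s) * rC) + (/ 2 - b1 / t) * rC / ((/ 2 - b1 / s) * rC) - 1))
    by (apply Rmult_le_compat_l; lra).
  assert (E : b1 * ((/ 2 - b1 / t) * rC / ((/ 2 - b1 / s) * rC) - 1)
     + c * (1 - 2 * (/ 2 - b1 / t)) - d * (1 - 2 * (/ 2 - b1 / s))
     = b1 * (((s - t) * (b2 * PD * (s - 2 * b1) - 2 * b1 * s)) / (t * s * (s - 2 * b1)))).
  { rewrite ct, ds. field. repeat split; lra. }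
  assert (b1 * (((s - t) * (b2 * PD * (s - 2 * b1) - 2 * b1 * s)) / (t * s * (s - 2 * b1))) <= 0).
  { assert (0 < t * s * (s - 2 * b1)) by (apply Rmult_lt_0_compat; [apply Rmult_lt_0_compat|]; lra).
    unfold Rdiv. assert (0 < / (t * s * (s - 2 * b1))) by (apply Rinv_0_lt_compat; lra).
    assert (((s - t) * (b2 * PD * (s - 2 * b1) - 2 * b1 * s)) * / (t * s * (s - 2 * b1)) <= 0).
    { rewrite <- (Rmult_0_l (/ (t * s * (s - 2 * b1)))); apply Rmult_le_compat_r; lra. } nra. }
  lra.
Qed.

Lemma UD2 b1 b2 PD rD c : 0 < b1 -> 0 < rD -> 2 * b1 < 2 * c - b2 * PD ->
  U_D b1 b2 PD rD (/ 2 - b1 / (2 * c - b2 * PD)) c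
  = b1 * ln (2 * b1 * rD / (2 * c - b2 * PD)) - b2 * PD / 2 - b1.
Proof.
  intros h1 hr ht. unfold U_D.
  replace ((1 - 2 * (/ 2 - b1 / (2 * c - b2 * PD))) * rD) with (2 * b1 * rD / (2 * c - b2 * PD)) by (field; lra).
  field. lra.
Qed.

Lemma L_alo b1 b2 PD rC Rth c : c <= c_low b1 b2 PD rC Rth ->
  alpha_star b1 b2 PD rC Rth c = Rth / rC.
Proof. intros h; unfold alpha_star; destruct (Rle_dec _ _); [reflexivity|contradiction]. Qed.

Lemma L_w b1 b2 PD rC Rth : 0 < b1 -> 0 < rC -> 0 < Rth -> rC > 2 * Rth ->
  (2 * c_low b1 b2 PD rC Rth - b2 * PD) * (1 - 2 * (Rth / rC)) = 2 * b1 /\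
  2 * b1 < 2 * c_low b1 b2 PD rC Rth - b2 * PD.
Proof.
  intros h1 hr hR hc. unfold c_low. split.
  - field. lra.
  - replace (2 * (b2 * PD / 2 + b1 * rC / (rC - 2 * Rth)) - b2 * PD) with (2 * b1 * (rC / (rC - 2 * Rth))) by (field; lra).
    assert (1 < rC / (rC - 2 * Rth)).
    { apply (Rmult_lt_reg_r (rC - 2 * Rth)); [lra|]. unfold Rdiv. rewrite Rmult_assoc, Rinv_l by lra. rewrite Rmult_1_l, Rmult_1_r. lra. }
    nra.
Qed.

Lemma L_ahi b1 b2 PD rC Rth c : 0 < b1 -> 0 < rC -> 0 < Rth -> rC > 2 * Rth ->
  c_low b1 b2 PD rC Rth <= c ->
  alpha_star b1 b2 PD rC Rth c = / 2 - b1 / (2 * c - b2 * PD).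
Proof.
  intros h1 hr hR hc hl. unfold alpha_star. destruct (Rle_dec _ _); [|reflexivity].
  assert (c = c_low b1 b2 PD rC Rth) by lra. subst c. unfold c_low. field. repeat split; nra.
Qed.

Lemma L_UD1 b1 b2 PD rC rD Rth c : c <= c_low b1 b2 PD rC Rth ->
  U_D b1 b2 PD rD (alpha_star b1 b2 PD rC Rth c) c =
  b1 * ln ((1 - 2 * (Rth / rC)) * rD) - b2 * PD * (Rth / rC) - c * (1 - 2 * (Rth / rC)).
Proof. intros h. rewrite L_alo by exact h. reflexivity. Qed.

Lemma L_ch b1 b2 PD rD : 0 < b1 ->
  (2 * c_high b1 b2 PD rD - b2 * PD) * exp (1 + b2 * PD / (2 * b1)) = 2 * b1 * rD.
Proof.
  intros h1. unfold c_high. rewrite exp_Ropp.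
  assert (0 < exp (1 + b2 * PD / (2 * b1))) by apply exp_pos. field. lra.
Qed.

Lemma L_feas2 b1 b2 PD rC rD Rth c : 0 < b1 -> 0 < rC -> 0 < Rth -> rC > 2 * Rth -> 0 < rD ->
  c_low b1 b2 PD rC Rth <= c ->
  (U_D b1 b2 PD rD (alpha_star b1 b2 PD rC Rth c) c >= 0 <-> c <= c_high b1 b2 PD rD).
Proof.
  intros h1 hr hR hc hD hl.
  destruct (L_w b1 b2 PD rC Rth h1 hr hR hc) as [_ hw].
  rewrite L_ahi by assumption. rewrite UD2 by (auto; lra).
  pose proof (L_ch b1 b2 PD rD h1) as Hh.
  assert (ht : 2 * b1 < 2 * c - b2 * PD) by lra.
  set (t := 2 * c - b2 * PD) in *.
  set (E := 1 + b2 * PD / (2 * b1)) in *.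
  set (X := 2 * b1 * rD / t).
  assert (hX : X * t = 2 * b1 * rD) by (unfold X; field; lra).
  assert (he : 0 < exp E) by apply exp_pos.
  assert (hE : b1 * E = b1 + b2 * PD / 2) by (unfold E; field; lra).
  assert (hXp : 0 < X) by (unfold X; apply Rdiv_lt_0_compat; nra).
  split.
  - intros H.
    assert (E <= ln X) by (apply (Rmult_le_reg_l b1); lra).
    assert (exp E <= X).
    { destruct (Rle_or_lt (exp E) X) as [|hlt]; auto.
      apply ln_increasing in hlt; auto. rewrite ln_exp in hlt. lra. }
    assert (t * exp E <= (2 * c_high b1 b2 PD rD - b2 * PD) * exp E) by nra.
    apply Rmult_le_reg_r in H2; auto. unfold t in H2. lra.
  - intros H.
    assert (t <= 2 * c_high b1 b2 PD rD - b2 * PD) by (unfold t; lra).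
    assert (exp E <= X) by nra.
    assert (E <= ln X).
    { destruct H1 as [hlt|heq].
      - apply ln_increasing in hlt; auto. rewrite ln_exp in hlt. lra.
      - rewrite <- heq, ln_exp. lra. }
    assert (b1 * E <= b1 * ln X) by (apply Rmult_le_compat_l; lra). lra.
Qed.

Lemma in_c1 b1 b2 PD rC rD Rth : In (c_1 b1 b2 PD rC rD Rth) (cand_set b1 b2 PD rC rD Rth).
Proof.
  unfold cand_set; cbv zeta.
  destruct (Rlt_dec _ _); [destruct (Rlt_dec _ _); [|destruct (Rlt_dec _ _)]| destruct (Rlt_dec _ _)];
  simpl; tauto.
Qed.

Lemma in_c2 b1 b2 PD rC rD Rth :
  c_low b1 b2 PD rC Rth < c_2 b1 b2 PD -> c_2 b1 b2 PD < c_high b1 b2 PD rD ->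
  In (c_2 b1 b2 PD) (cand_set b1 b2 PD rC rD Rth).
Proof.
  intros h1 h2. unfold cand_set; cbv zeta.
  destruct (Rlt_dec _ _); [destruct (Rlt_dec _ _)|]; try contradiction; simpl; tauto.
Qed.

Lemma in_hl b1 b2 PD rC rD Rth :
  ~ (c_low b1 b2 PD rC Rth < c_2 b1 b2 PD /\ c_2 b1 b2 PD < c_high b1 b2 PD rD) ->
  ~ (c_high b1 b2 PD rD < c_low b1 b2 PD rC Rth) ->
  In (c_high b1 b2 PD rD) (cand_set b1 b2 PD rC rD Rth) /\
  In (c_low b1 b2 PD rC Rth) (cand_set b1 b2 PD rC rD Rth).
Proof.
  intros h1 h2. unfold cand_set; cbv zeta.
  destruct (Rlt_dec _ _); [destruct (Rlt_dec _ _); [tauto|destruct (Rlt_dec _ _)]| destruct (Rlt_dec _ _)];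
  try contradiction; simpl; tauto.
Qed.

Lemma in_cases b1 b2 PD rC rD Rth d : In d (cand_set b1 b2 PD rC rD Rth) ->
  d = c_1 b1 b2 PD rC rD Rth \/
  (d = c_2 b1 b2 PD /\ c_low b1 b2 PD rC Rth < c_2 b1 b2 PD /\ c_2 b1 b2 PD < c_high b1 b2 PD rD) \/
  ((d = c_high b1 b2 PD rD \/ d = c_low b1 b2 PD rC Rth) /\ ~ (c_high b1 b2 PD rD < c_low b1 b2 PD rC Rth)).
Proof.
  unfold cand_set; cbv zeta.
  destruct (Rlt_dec _ _); [destruct (Rlt_dec _ _); [|destruct (Rlt_dec _ _)]| destruct (Rlt_dec _ _)];
  simpl; intuition (subst; auto).
Qed.

Lemma prod1 x y : 0 <= x -> y <= 0 -> x * y <= 0.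
Proof. intros; nra. Qed.
Lemma prod2 x y : x <= 0 -> 0 <= y -> x * y <= 0.
Proof. intros; nra. Qed.

Theorem theorem1 (b1 b2 PD Rth rC rD : R)
  (hb1 : 0 < b1) (hb2 : 0 < b2) (hPD : 0 < PD) (hRth : 0 < Rth)
  (hrC : 0 < rC) (hrD : 0 < rD)
  (hcap : rC > 2 * Rth)
  (hpos : b1 * ln ((1 - 2 * (Rth / rC)) * rD) - b2 * PD * (Rth / rC) >= 0)
  (cstar : R)
  (hin : In cstar (cand_set b1 b2 PD rC rD Rth))
  (hmax : forall c, In c (cand_set b1 b2 PD rC rD Rth) ->
          U_C b1 rC (alpha_star b1 b2 PD rC Rth c) c
          <= U_C b1 rC (alpha_star b1 b2 PD rC Rth cstar) cstar) :
  (forall c,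
     0 < alpha_star b1 b2 PD rC Rth c < / 2 /\
     alpha_star b1 b2 PD rC Rth c * rC >= Rth /\
     (forall alpha, 0 < alpha < / 2 -> alpha * rC >= Rth ->
        U_D b1 b2 PD rD alpha c
        <= U_D b1 b2 PD rD (alpha_star b1 b2 PD rC Rth c) c)) /\
  (0 <= cstar /\
   U_D b1 b2 PD rD (alpha_star b1 b2 PD rC Rth cstar) cstar >= 0 /\
   (forall c, 0 <= c ->
      U_D b1 b2 PD rD (alpha_star b1 b2 PD rC Rth c) c >= 0 ->
      U_C b1 rC (alpha_star b1 b2 PD rC Rth c) c
      <= U_C b1 rC (alpha_star b1 b2 PD rC Rth cstar) cstar)).
Proof.
  destruct (L_w b1 b2 PD rC Rth hb1 hrC hRth hcap) as [hw1 hw2].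
  assert (hbp : 0 < b2 * PD) by (apply Rmult_lt_0_compat; lra).
  assert (har : Rth / rC * rC = Rth) by (field; lra).
  assert (ha0 : 0 < Rth / rC) by (apply Rdiv_lt_0_compat; lra).
  assert (ha2 : Rth / rC < / 2) by nra.
  assert (hcl0 : b2 * PD / 2 < c_low b1 b2 PD rC Rth) by lra.
  set (K := (b1 * ln ((1 - 2 * (Rth / rC)) * rD) - b2 * (Rth / rC) * PD) / (1 - 2 * (Rth / rC))).
  assert (hKd : K * (1 - 2 * (Rth / rC)) = b1 * ln ((1 - 2 * (Rth / rC)) * rD) - b2 * PD * (Rth / rC))
    by (unfold K; field; lra).
  assert (hK0 : 0 <= K) by (unfold K, Rdiv; apply Rmult_le_pos; [nra | left; apply Rinv_0_lt_compat; lra]).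
  assert (hc1 : c_1 b1 b2 PD rC rD Rth = Rmin (c_low b1 b2 PD rC Rth) K) by reflexivity.
  assert (hF1 : forall c, c <= c_low b1 b2 PD rC Rth ->
     (U_D b1 b2 PD rD (alpha_star b1 b2 PD rC Rth c) c >= 0 <-> c <= K)).
  { intros c hc. rewrite L_UD1 by exact hc. split; intros; nra. }
  assert (hF2 : forall c, c_low b1 b2 PD rC Rth <= c ->
     (U_D b1 b2 PD rD (alpha_star b1 b2 PD rC Rth c) c >= 0 <-> c <= c_high b1 b2 PD rD)).
  { intros c hc. apply L_feas2; auto. }
  assert (hc1l : c_1 b1 b2 PD rC rD Rth <= c_low b1 b2 PD rC Rth) by (rewrite hc1; apply Rmin_l).
  assert (hc1K : c_1 b1 b2 PD rC rD Rth <= K) by (rewrite hc1; apply Rmin_r).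
  assert (hc10 : 0 <= c_1 b1 b2 PD rC rD Rth) by (rewrite hc1; apply Rmin_glb; lra).
  assert (hD : b2 * PD - 2 * b1 <= 0 -> c_2 b1 b2 PD <= b2 * PD / 2).
  { intros hd. unfold c_2, Rdiv.
    assert (/ (b2 * PD - 2 * b1) <= 0).
    { destruct hd as [hd|hd]. - left. apply Rinv_lt_0_compat; lra.
      - rewrite hd, Rinv_0. lra. }
    assert (0 < b1 * b2 * PD) by (apply Rmult_lt_0_compat; [apply Rmult_lt_0_compat|]; lra).
    nra. }
  assert (hD2 : 0 < b2 * PD - 2 * b1 ->
     (2 * c_2 b1 b2 PD - b2 * PD) * (b2 * PD - 2 * b1) = 2 * b1 * (b2 * PD)).
  { intros hd. unfold c_2. field. lra. }
  assert (hch0 : 0 < 2 * c_high b1 b2 PD rD - b2 * PD).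
  { unfold c_high. assert (0 < exp (- (1 + b2 * PD / (2 * b1)))) by apply exp_pos.
    assert (0 < b1 * rD) by (apply Rmult_lt_0_compat; lra). nra. }
  split.
  - intros c. destruct (Rle_dec c (c_low b1 b2 PD rC Rth)) as [hl|hl].
    + rewrite L_alo by exact hl. split; [lra|]. split; [lra|].
      intros al hal hr. apply UD_cmp; auto; try lra.
      assert (Rth / rC <= al) by nra.
      assert (2 * c - b2 * PD - 2 * b1 / (1 - 2 * (Rth / rC)) <= 0).
      { replace (2 * b1 / (1 - 2 * (Rth / rC))) with (2 * c_low b1 b2 PD rC Rth - b2 * PD)
          by (rewrite <- hw1; field; lra). lra. }
      nra.
    + rewrite L_ahi by (auto; lra).
      assert (ht : 2 * c_low b1 b2 PD rC Rth - b2 * PD < 2 * c - b2 * PD) by lra.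
      set (t := 2 * c - b2 * PD) in *.
      set (q := b1 / t).
      assert (hq : q * t = b1) by (unfold q; field; lra).
      assert (0 < q) by (unfold q; apply Rdiv_lt_0_compat; lra).
      assert (q < / 2) by nra.
      split; [lra|]. split.
      { assert (q <= (1 - 2 * (Rth / rC)) / 2) by nra. nra. }
      intros al hal hr. apply UD_cmp; auto; try lra.
      replace (2 * b1 / (1 - 2 * (/ 2 - q))) with t.
      { unfold t. replace (2 * c - b2 * PD - (2 * c - b2 * PD)) with 0 by ring. lra. }
      unfold q. field. lra.
  - assert (Hcs : 0 <= cstar /\ U_D b1 b2 PD rD (alpha_star b1 b2 PD rC Rth cstar) cstar >= 0).
    { destruct (in_cases _ _ _ _ _ _ _ hin) as [->|[[-> [h1 h2]]|[[-> | ->] h]]].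
      - split; [lra|]. apply hF1; auto.
      - split; [lra|]. apply hF2; lra.
      - split; [lra|]. apply hF2; lra.
      - split; [lra|]. apply hF2; lra. }
    split; [tauto|]. split; [tauto|].
    intros c hc hf.
    destruct (Rle_dec c (c_low b1 b2 PD rC Rth)) as [hl|hl].
    + assert (c <= K) by (apply hF1; auto).
      assert (c <= c_1 b1 b2 PD rC rD Rth) by (rewrite hc1; apply Rmin_glb; lra).
      eapply Rle_trans; [|apply hmax, in_c1].
      rewrite !L_alo by lra. unfold U_C. nra.
    + assert (hh : c <= c_high b1 b2 PD rD) by (apply hF2; auto; lra).
      assert (hcl2 : c_low b1 b2 PD rC Rth <= c_low b1 b2 PD rC Rth) by lra.
      destruct (Rlt_dec (c_low b1 b2 PD rC Rth) (c_2 b1 b2 PD)) as [hA|hA].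
      * assert (hDp : 0 < b2 * PD - 2 * b1).
        { destruct (Rle_dec (b2 * PD - 2 * b1) 0) as [x|x]; [apply hD in x; lra| lra]. }
        specialize (hD2 hDp).
        destruct (Rlt_dec (c_2 b1 b2 PD) (c_high b1 b2 PD rD)) as [hB|hB].
        -- eapply Rle_trans; [|apply hmax, in_c2; auto].
           rewrite !L_ahi by (auto; lra). apply UC_cmp; try lra.
           assert (Hb : b2 * PD * ((2 * c_2 b1 b2 PD - b2 * PD) - 2 * b1) - 2 * b1 * (2 * c_2 b1 b2 PD - b2 * PD) = 0) by nra.
           rewrite Hb, Rmult_0_r. lra.
        -- eapply Rle_trans; [|apply hmax, (proj1 (in_hl b1 b2 PD rC rD Rth ltac:(lra) ltac:(lra)))].
           rewrite !L_ahi by (auto; lra). apply UC_cmp; try lra.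
           assert (b2 * PD * ((2 * c_high b1 b2 PD rD - b2 * PD) - 2 * b1) - 2 * b1 * (2 * c_high b1 b2 PD rD - b2 * PD) <= 0) by nra.
           apply prod1; [lra|assumption].
      * destruct (in_hl b1 b2 PD rC rD Rth) as [inh inl]; [lra|lra|].
        destruct (Rle_dec (b2 * PD - 2 * b1) 0) as [hd|hd].
        -- eapply Rle_trans; [|apply hmax, inh].
           rewrite !L_ahi by (auto; lra). apply UC_cmp; try lra.
           assert (b2 * PD * ((2 * c_high b1 b2 PD rD - b2 * PD) - 2 * b1) - 2 * b1 * (2 * c_high b1 b2 PD rD - b2 * PD) <= 0) by nra.
           apply prod1; [lra|assumption].
        -- assert (hDp : 0 < b2 * PD - 2 * b1) by lra.
           specialize (hD2 hDp).
           eapply Rle_trans; [|apply hmax, inl].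
           rewrite !L_ahi by (auto; lra). apply UC_cmp; try lra.
           assert (0 <= b2 * PD * ((2 * c_low b1 b2 PD rC Rth - b2 * PD) - 2 * b1) - 2 * b1 * (2 * c_low b1 b2 PD rC Rth - b2 * PD)) by nra.
           apply prod2; [lra|assumption].
Qed.
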